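(* Let $f$ be a homeomorphism of a compact metric space $(X,d)$ with the L-shadowing property. Then for every $\epsilon>0$ there exists $\delta>0$ such that for every $x\in X$: if $V^s_\epsilon(x)\cap V^u_\epsilon(x)=\{x\}$ then $\Gamma_\delta(x)=\{x\}$.
   Context: L-shadowing: for every $\varepsilon>0$ there is $\delta>0$ such that every sequence $(x_k)_{k\in\mathbb{Z}}$ with $d(f(x_k),x_{k+1})\le\delta$ for all $k$ and $d(f(x_k),x_{k+1})\to0$ as $|k|\to\infty$ admits $z$ with $d(f^k(z),x_k)\le\varepsilon$ for all $k$ and $d(f^k(z),x_k)\to0$ as $|k|\to\infty$. $W^s_\epsilon(x)=\{y: d(f^n(x),f^n(y))\le\epsilon\ \forall n\ge0\}$, $W^u_\epsilon(x)=\{y: d(f^{-n}(x),f^{-n}(y))\le\epsilon\ \forall n\ge0\}$, $W^s(x)=\{y: d(f^n(x),f^n(y))\to0\ (n\to+\infty)\}$, $W^u(x)=\{y: d(f^{-n}(x),f^{-n}(y))\to0\ (n\to+\infty)\}$, $V^s_\epsilon(x)=W^s(x)\cap W^s_\epsilon(x)$, $V^u_\epsilon(x)=W^u(x)\cap W^u_\epsilon(x)$. Dynamical ball: $\Gamma_\delta(x)=\{y\in X: d(f^n(x),f^n(y))\le\delta\ \forall n\in\mathbb{Z}\}$. *)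

(* Defs.v *)
From Stdlib Require Import Reals Lra.
Open Scope R_scope.

Definition is_metric {X : Type} (d : X -> X -> R) : Prop :=
  (forall x y, 0 <= d x y) /\
  (forall x y, d x y = 0 <-> x = y) /\
  (forall x y, d x y = d y x) /\
  (forall x y z, d x z <= d x y + d y z).

Definition open_set {X : Type} (d : X -> X -> R) (U : X -> Prop) : Prop :=
  forall x, U x -> exists r, 0 < r /\ forall y, d x y < r -> U y.

Definition compact_space {X : Type} (d : X -> X -> R) : Prop :=
  forall (I : Type) (U : I -> X -> Prop),
    (forall i, open_set d (U i)) ->
    (forall x, exists i, U i x) ->
    exists l : list I, forall x, exists i, List.In i l /\ U i x.

Definition continuous_map {X : Type} (d : X -> X -> R) (f : X -> X) : Prop :=
  forall x eps, 0 < eps -> exists del, 0 < del /\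
    forall y, d x y < del -> d (f x) (f y) < eps.

Definition homeomorphism {X : Type} (d : X -> X -> R) (f g : X -> X) : Prop :=
  continuous_map d f /\ continuous_map d g /\
  (forall x, g (f x) = x) /\ (forall x, f (g x) = x).

Fixpoint iter {X : Type} (h : X -> X) (n : nat) (x : X) : X :=
  match n with O => x | S m => h (iter h m x) end.

Definition zpow {X : Type} (f g : X -> X) (k : Z) (x : X) : X :=
  match k with
  | Z0 => x
  | Zpos p => iter f (Pos.to_nat p) x
  | Zneg p => iter g (Pos.to_nat p) x
  end.

Definition tends0_Z (a : Z -> R) : Prop :=
  forall eps, 0 < eps -> exists N : nat, forall k : Z,
    (Z.of_nat N <= Z.abs k)%Z -> Rabs (a k) < eps.

Definition tends0_N (a : nat -> R) : Prop :=
  forall eps, 0 < eps -> exists N : nat, forall n, (N <= n)%nat -> Rabs (a n) < eps.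

Definition L_shadowing {X : Type} (d : X -> X -> R) (f g : X -> X) : Prop :=
  forall eps, 0 < eps -> exists del, 0 < del /\
    forall xs : Z -> X,
      (forall k, d (f (xs k)) (xs (k + 1)%Z) <= del) ->
      tends0_Z (fun k => d (f (xs k)) (xs (k + 1)%Z)) ->
      exists z, (forall k, d (zpow f g k z) (xs k) <= eps) /\
                tends0_Z (fun k => d (zpow f g k z) (xs k)).

Definition Ws_eps {X : Type} (d : X -> X -> R) (f : X -> X) (eps : R) (x y : X) : Prop :=
  forall n : nat, d (iter f n x) (iter f n y) <= eps.
Definition Wu_eps {X : Type} (d : X -> X -> R) (g : X -> X) (eps : R) (x y : X) : Prop :=
  forall n : nat, d (iter g n x) (iter g n y) <= eps.
Definition Ws {X : Type} (d : X -> X -> R) (f : X -> X) (x y : X) : Prop :=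
  tends0_N (fun n => d (iter f n x) (iter f n y)).
Definition Wu {X : Type} (d : X -> X -> R) (g : X -> X) (x y : X) : Prop :=
  tends0_N (fun n => d (iter g n x) (iter g n y)).

Definition Vs_eps {X : Type} (d : X -> X -> R) (f : X -> X) (eps : R) (x y : X) : Prop :=
  Ws d f x y /\ Ws_eps d f eps x y.
Definition Vu_eps {X : Type} (d : X -> X -> R) (g : X -> X) (eps : R) (x y : X) : Prop :=
  Wu d g x y /\ Wu_eps d g eps x y.

Definition Gamma {X : Type} (d : X -> X -> R) (f g : X -> X) (del : R) (x y : X) : Prop :=
  forall k : Z, d (zpow f g k x) (zpow f g k y) <= del.

(* Main.v *)
From Stdlib Require Import Reals Lra Lia ZArith List Classical.
Require Import Defs.
Open Scope R_scope.

Lemma m_nonneg {X} (d : X -> X -> R) : is_metric d -> forall x y, 0 <= d x y.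
Proof. intros [H _]; auto. Qed.
Lemma m_refl {X} (d : X -> X -> R) : is_metric d -> forall x : X, d x x = 0.
Proof. intros [_ [H _]] x. apply H. reflexivity. Qed.
Lemma m_eq {X} (d : X -> X -> R) : is_metric d -> forall x y : X, d x y = 0 -> x = y.
Proof. intros [_ [H _]] x y. apply H. Qed.
Lemma m_sym {X} (d : X -> X -> R) : is_metric d -> forall x y : X, d x y = d y x.
Proof. intros [_ [_ [H _]]]; auto. Qed.
Lemma m_tri {X} (d : X -> X -> R) : is_metric d -> forall x y z : X, d x z <= d x y + d y z.
Proof. intros [_ [_ [_ H]]]; auto. Qed.

Lemma zpow_nat {X} (f g : X -> X) n u : zpow f g (Z.of_nat n) u = iter f n u.
Proof. destruct n; [reflexivity|]. cbn [Z.of_nat zpow]. rewrite SuccNat2Pos.id_succ. reflexivity. Qed.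
Lemma zpow_negnat {X} (f g : X -> X) n u : zpow f g (- Z.of_nat n) u = iter g n u.
Proof. destruct n; [reflexivity|]. cbn [Z.of_nat Z.opp zpow]. rewrite SuccNat2Pos.id_succ. reflexivity. Qed.

Lemma zpow_succ {X} (f g : X -> X) : (forall x, f (g x) = x) ->
  forall k u, zpow f g (k+1) u = f (zpow f g k u).
Proof.
  intros Hfg k u.
  destruct (Z_le_gt_dec 0 k) as [Hk|Hk].
  - replace k with (Z.of_nat (Z.to_nat k)) by lia.
    replace (Z.of_nat (Z.to_nat k) + 1)%Z with (Z.of_nat (S (Z.to_nat k))) by lia.
    rewrite !zpow_nat. reflexivity.
  - remember (Z.to_nat (- k - 1)) as n eqn:Hn.
    replace k with (- Z.of_nat (S n))%Z by lia.
    replace (- Z.of_nat (S n) + 1)%Z with (- Z.of_nat n)%Z by lia.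
    rewrite !zpow_negnat. simpl. rewrite Hfg. reflexivity.
Qed.

Lemma zpow_pred {X} (f g : X -> X) : (forall x, f (g x) = x) -> (forall x, g (f x) = x) ->
  forall k u, zpow f g (k-1) u = g (zpow f g k u).
Proof.
  intros Hfg Hgf k u.
  replace (zpow f g k u) with (zpow f g ((k-1)+1) u) by (f_equal; lia).
  rewrite zpow_succ by auto. rewrite Hgf. reflexivity.
Qed.

Lemma zpow_add {X} (f g : X -> X) : (forall x, f (g x) = x) -> (forall x, g (f x) = x) ->
  forall a b u, zpow f g (a + b) u = zpow f g a (zpow f g b u).
Proof.
  intros Hfg Hgf a b u. induction a using Z.peano_ind.
  - reflexivity.
  - rewrite <- Z.add_1_r. replace (a + 1 + b)%Z with ((a+b)+1)%Z by lia.
    rewrite !zpow_succ, IHa; auto.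
  - rewrite <- Z.sub_1_r. replace (a - 1 + b)%Z with ((a+b)-1)%Z by lia.
    rewrite !zpow_pred, IHa; auto.
Qed.

Lemma zpow_shift {X} (f g : X -> X) : (forall x, f (g x) = x) -> (forall x, g (f x) = x) ->
  forall k T u, zpow f g k u = zpow f g (k - T) (zpow f g T u).
Proof. intros. rewrite <- zpow_add by auto. f_equal. lia. Qed.

Lemma iter_cont {X} (d : X -> X -> R) h : continuous_map d h ->
  forall n a s, 0 < s -> exists r, 0 < r /\ forall b, d a b < r ->
    forall m, (m <= n)%nat -> d (iter h m a) (iter h m b) < s.
Proof.
  intros Hc n. induction n as [|n IH]; intros a s Hs.
  - exists s; split; auto. intros b Hb m Hm. assert (m = 0%nat) by lia. subst. simpl. auto.
  - destruct (Hc (iter h n a) s Hs) as [e [He Hce]].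
    destruct (IH a (Rmin s e) (Rmin_pos _ _ Hs He)) as [r [Hr Hrr]].
    exists r; split; auto. intros b Hb m Hm.
    destruct (Nat.eq_dec m (S n)) as [->|Hne].
    + simpl. apply Hce. eapply Rlt_le_trans. apply (Hrr b Hb n); lia. apply Rmin_r.
    + eapply Rlt_le_trans; [apply (Hrr b Hb m); lia| apply Rmin_l].
Qed.

Lemma zpow_cont {X} (d : X -> X -> R) f g : continuous_map d f -> continuous_map d g ->
  forall K a s, 0 < s -> exists r, 0 < r /\ forall b, d a b < r ->
    forall m, (Z.abs m <= Z.of_nat K)%Z -> d (zpow f g m a) (zpow f g m b) < s.
Proof.
  intros Hf Hg K a s Hs.
  destruct (iter_cont d f Hf K a s Hs) as [r1 [Hr1 H1]].
  destruct (iter_cont d g Hg K a s Hs) as [r2 [Hr2 H2]].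
  exists (Rmin r1 r2); split; [apply Rmin_pos; auto|].
  intros b Hb m Hm.
  assert (Hb1 : d a b < r1) by (eapply Rlt_le_trans; [exact Hb| apply Rmin_l]).
  assert (Hb2 : d a b < r2) by (eapply Rlt_le_trans; [exact Hb| apply Rmin_r]).
  destruct m as [|p|p]; simpl in Hm.
  - exact (H1 b Hb1 0%nat (Nat.le_0_l _)).
  - simpl. apply H1; auto. pose proof (positive_nat_Z p). lia.
  - simpl. apply H2; auto. pose proof (positive_nat_Z p). lia.
Qed.

Lemma fold_min_le {A} (F : A -> R) (l : list A) : (forall a, In a l -> 0 < F a) ->
  0 < fold_right (fun a acc => Rmin (F a) acc) 1 l /\
  forall a, In a l -> fold_right (fun a acc => Rmin (F a) acc) 1 l <= F a.
Proof.
  induction l as [|x l IH]; intros Hpos; simpl.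
  - split; [lra| intros a []].
  - destruct IH as [IH1 IH2]. { intros a Ha; apply Hpos; simpl; auto. }
    split.
    + apply Rmin_pos; [apply Hpos; simpl; auto| auto].
    + intros a [<-|Ha].
      * apply Rmin_l.
      * eapply Rle_trans; [apply Rmin_r| auto].
Qed.

Lemma fold_max_ge {A} (F : A -> nat) (l : list A) : forall a, In a l ->
  (F a <= fold_right (fun a acc => Nat.max (F a) acc) 0 l)%nat.
Proof.
  induction l as [|x l IH]; simpl; intros a Ha; [destruct Ha|].
  destruct Ha as [<-|Ha]; [lia| specialize (IH a Ha); lia].
Qed.

Lemma cluster {X} (d : X -> X -> R) : is_metric d -> compact_space d ->
  forall (S : R -> nat -> Prop),
  (forall r r' j, r <= r' -> S r j -> S r' j) ->
  (forall r N, 0 < r -> exists j, (N <= j)%nat /\ S r j) ->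
  forall b : nat -> X,
  exists q, forall r N, 0 < r -> exists j, (N <= j)%nat /\ S r j /\ d (b j) q < r.
Proof.
  intros Hm Hc S Smono Sinf b.
  apply NNPP. intro Hno.
  pose (I := {q : X & {rN : R * nat | 0 < fst rN /\
     forall j, (snd rN <= j)%nat -> S (fst rN) j -> fst rN <= d (b j) q}}).
  pose (rad := fun i : I => fst (proj1_sig (projT2 i))).
  pose (Nn := fun i : I => snd (proj1_sig (projT2 i))).
  pose (U := fun (i : I) (y : X) => d (projT1 i) y < rad i).
  assert (Hopen : forall i, open_set d (U i)).
  { intros i y Hy. exists (rad i - d (projT1 i) y). split; [unfold U in Hy; lra|].
    intros z Hz. unfold U. pose proof (m_tri d Hm (projT1 i) y z). lra. }
  assert (Hcov : forall y, exists i, U i y).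
  { intros y.
    assert (H: exists r N, 0 < r /\ forall j, (N <= j)%nat -> S r j -> r <= d (b j) y).
    { apply NNPP; intro H. apply Hno. exists y. intros r N Hr.
      apply NNPP; intro H2. apply H. exists r, N. split; auto. intros j Hj HS.
      apply Rnot_lt_le. intro Hlt. apply H2. exists j. auto. }
    destruct H as [r [N [Hr HN]]].
    exists (existT _ y (exist _ (r, N) (conj Hr HN))). unfold U, rad; simpl.
    rewrite m_refl; auto. }
  destruct (Hc I U Hopen Hcov) as [l Hl].
  assert (Hpos : forall i, In i l -> 0 < rad i).
  { intros i _. unfold rad. destruct (projT2 i) as [rN [H1 H2]]. simpl. auto. }
  destruct (fold_min_le rad l Hpos) as [Hr0 Hr0le].
  set (r0 := fold_right (fun a acc => Rmin (rad a) acc) 1 l) in *.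
  set (N0 := fold_right (fun a acc => Nat.max (Nn a) acc) 0%nat l).
  destruct (Sinf r0 N0 Hr0) as [j [Hj HS]].
  destruct (Hl (b j)) as [i [Hin HU]].
  unfold U in HU.
  assert (Hprop := proj2 (proj2_sig (projT2 i))).
  assert (HNi : (Nn i <= N0)%nat) by (apply fold_max_ge; auto).
  assert (Hle : rad i <= d (b j) (projT1 i)).
  { apply Hprop. unfold Nn in HNi. lia. apply (Smono r0); [apply Hr0le; exact Hin| exact HS]. }
  rewrite (m_sym d Hm) in HU. lra.
Qed.
Definition cat {X} (A B : Z -> X) (t : Z) : Z -> X := fun k => if Z.ltb k t then A k else B k.

Definition PO {X} (d : X -> X -> R) (f : X -> X) (xs : Z -> X) (del : R) : Prop :=
  (forall k, d (f (xs k)) (xs (k+1)%Z) <= del) /\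
  exists N : nat, forall k, (Z.of_nat N <= Z.abs k)%Z -> d (f (xs k)) (xs (k+1)%Z) = 0.

Lemma PO_orbit {X} (d : X -> X -> R) f (A : Z -> X) del : is_metric d -> 0 <= del ->
  (forall k, f (A k) = A (k+1)%Z) -> PO d f A del.
Proof.
  intros Hm Hdel HA. split.
  - intros k. rewrite HA, m_refl; auto.
  - exists 0%nat. intros k _. rewrite HA, m_refl; auto.
Qed.

Lemma PO_cat {X} (d : X -> X -> R) f (A B : Z -> X) t del : is_metric d -> 0 <= del ->
  (forall k, f (A k) = A (k+1)%Z) -> PO d f B del -> d (A t) (B t) <= del ->
  PO d f (cat A B t) del.
Proof.
  intros Hm Hdel HA [HB1 [NB HB2]] Hs. unfold cat. split.
  - intros k. destruct (Z.ltb_spec k t); destruct (Z.ltb_spec (k+1) t).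
    + rewrite HA, m_refl; auto.
    + rewrite HA. replace (k+1)%Z with t by lia. auto.
    + lia.
    + auto.
  - exists (Nat.max NB (Z.to_nat (Z.abs t) + 2)). intros k Hk.
    destruct (Z.ltb_spec k t); destruct (Z.ltb_spec (k+1) t).
    + rewrite HA, m_refl; auto.
    + lia.
    + lia.
    + apply HB2. lia.
Qed.

Lemma PO_tends {X} (d : X -> X -> R) f xs del : PO d f xs del ->
  tends0_Z (fun k => d (f (xs k)) (xs (k + 1)%Z)).
Proof.
  intros [_ [N HN]] e He. exists N. intros k Hk. rewrite HN by auto. rewrite Rabs_R0. auto.
Qed.

Lemma bridge {X} (d : X -> X -> R) f g : is_metric d -> (forall x, f (g x) = x) ->
  forall e1 del1, 0 <= del1 ->
  (forall xs : Z -> X, (forall k, d (f (xs k)) (xs (k+1)%Z) <= del1) ->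
      tends0_Z (fun k => d (f (xs k)) (xs (k + 1)%Z)) ->
      exists z, (forall k, d (zpow f g k z) (xs k) <= e1) /\
                tends0_Z (fun k => d (zpow f g k z) (xs k))) ->
  forall u0 v0 s, d u0 v0 <= del1 -> 0 < s ->
  exists w (K : nat), (1 <= K)%nat /\
    (forall m, (m < 0)%Z -> d (zpow f g m w) (zpow f g m u0) <= e1) /\
    (forall m, (0 <= m)%Z -> d (zpow f g m w) (zpow f g m v0) <= e1) /\
    d (zpow f g (- Z.of_nat K) w) (zpow f g (- Z.of_nat K) u0) < s /\
    d (zpow f g (Z.of_nat K) w) (zpow f g (Z.of_nat K) v0) < s.
Proof.
  intros Hm Hfg e1 del1 Hdel HL u0 v0 s Huv Hs.
  set (xs := cat (fun k => zpow f g k u0) (fun k => zpow f g k v0) 0).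
  assert (HP : PO d f xs del1).
  { apply PO_cat; auto.
    - intros k. rewrite zpow_succ; auto.
    - apply PO_orbit; auto. intros k. rewrite zpow_succ; auto. }
  destruct (HL xs (proj1 HP) (PO_tends _ _ _ _ HP)) as [z [Hz1 Hz2]].
  destruct (Hz2 s Hs) as [N HN].
  exists z, (S N). split; [lia|]. split; [|split; [|split]].
  - intros m Hm0. specialize (Hz1 m). unfold xs, cat in Hz1.
    destruct (Z.ltb_spec m 0); [auto|lia].
  - intros m Hm0. specialize (Hz1 m). unfold xs, cat in Hz1.
    destruct (Z.ltb_spec m 0); [lia|auto].
  - specialize (HN (- Z.of_nat (S N))%Z ltac:(lia)). unfold xs, cat in HN.
    destruct (Z.ltb_spec (- Z.of_nat (S N)) 0); [|lia].
    rewrite Rabs_right in HN; auto. apply Rle_ge, m_nonneg; auto.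
  - specialize (HN (Z.of_nat (S N)) ltac:(lia)). unfold xs, cat in HN.
    destruct (Z.ltb_spec (Z.of_nat (S N)) 0); [lia|].
    rewrite Rabs_right in HN; auto. apply Rle_ge, m_nonneg; auto.
Qed.

Lemma loop {X} (d : X -> X -> R) f g : is_metric d ->
  forall eps x, (forall y, (Vs_eps d f eps x y /\ Vu_eps d g eps x y) <-> y = x) ->
  forall eta deta,
  (forall xs : Z -> X, (forall k, d (f (xs k)) (xs (k+1)%Z) <= deta) ->
      tends0_Z (fun k => d (f (xs k)) (xs (k + 1)%Z)) ->
      exists z, (forall k, d (zpow f g k z) (xs k) <= eta) /\
                tends0_Z (fun k => d (zpow f g k z) (xs k))) ->
  forall (xi : Z -> X) c, PO d f xi deta -> c + eta <= eps ->
  (forall k, d (xi k) (zpow f g k x) <= c) ->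
  (exists N : nat, forall k, (Z.of_nat N <= Z.abs k)%Z -> xi k = zpow f g k x) ->
  forall k, d (xi k) (zpow f g k x) <= eta.
Proof.
  intros Hm eps x Hx eta deta HL xi c HP Hce Htube [N2 HN2].
  destruct (HL xi (proj1 HP) (PO_tends _ _ _ _ HP)) as [z [Hz1 Hz2]].
  assert (Hzx : z = x).
  { apply (proj1 (Hx z)). split; split.
    - intros r Hr. destruct (Hz2 r Hr) as [N1 HN1]. exists (Nat.max N1 N2). intros n Hn.
      specialize (HN1 (Z.of_nat n) ltac:(lia)). rewrite (HN2 (Z.of_nat n)) in HN1 by lia.
      rewrite !zpow_nat in HN1. rewrite m_sym; auto.
    - intros n. pose proof (Hz1 (Z.of_nat n)). pose proof (Htube (Z.of_nat n)).
      rewrite !zpow_nat in *.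
      pose proof (m_tri d Hm (iter f n x) (xi (Z.of_nat n)) (iter f n z)).
      rewrite (m_sym d Hm (iter f n x) (xi _)) in H1. rewrite (m_sym d Hm (xi _) (iter f n z)) in H1. lra.
    - intros r Hr. destruct (Hz2 r Hr) as [N1 HN1]. exists (Nat.max N1 N2). intros n Hn.
      specialize (HN1 (- Z.of_nat n)%Z ltac:(lia)). rewrite (HN2 (- Z.of_nat n)%Z) in HN1 by lia.
      rewrite !zpow_negnat in HN1. rewrite m_sym; auto.
    - intros n. pose proof (Hz1 (- Z.of_nat n)%Z). pose proof (Htube (- Z.of_nat n)%Z).
      rewrite !zpow_negnat in *.
      pose proof (m_tri d Hm (iter g n x) (xi (- Z.of_nat n)%Z) (iter g n z)).
      rewrite (m_sym d Hm (iter g n x) (xi _)) in H1. rewrite (m_sym d Hm (xi _) (iter g n z)) in H1. lra. }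
  subst z. intros k. rewrite m_sym; auto.
Qed.
Ltac ltbs := repeat match goal with |- context [Z.ltb ?a ?b] => destruct (Z.ltb_spec a b) end.

Theorem mainTheorem12 (X : Type) (d : X -> X -> R) (f g : X -> X) :
  is_metric d -> compact_space d -> homeomorphism d f g ->
  L_shadowing d f g ->
  forall eps, 0 < eps -> exists del, 0 < del /\
    forall x : X,
      (forall y, (Vs_eps d f eps x y /\ Vu_eps d g eps x y) <-> y = x) ->
      (forall y, Gamma d f g del x y <-> y = x).
Proof.
  intros Hm Hc [Hfc [Hgc [Hgf Hfg]]] HL eps Heps.
  set (e1 := eps / 4).
  assert (He1 : 0 < e1) by (unfold e1; lra).
  destruct (HL e1 He1) as [d1 [Hd1 HL1]].
  assert (Hdel0: 0 < Rmin d1 e1) by (apply Rmin_pos; auto).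
  exists (Rmin d1 e1). split; [exact Hdel0|].
  set (del := Rmin d1 e1) in *.
  assert (Hdel1 : del <= d1) by apply Rmin_l.
  assert (Hdel2 : del <= e1) by apply Rmin_r.
  intros x Hx y. split.
  2:{ intros ->. intro k. rewrite m_refl; auto; lra. }
  intros HG. unfold Gamma in HG.
  destruct (cluster d Hm Hc (fun _ _ => True) (fun _ _ _ _ H => H)
     (fun r N _ => ex_intro _ N (conj (le_n N) I)) (fun j => zpow f g (- Z.of_nat j) x))
     as [p1 Hp1].
  destruct (cluster d Hm Hc (fun r j => d (zpow f g (- Z.of_nat j) x) p1 < r))
     with (b := fun j => zpow f g (- Z.of_nat j) y) as [q1 Hq1].
  { intros r r' j Hr H. lra. }
  { intros r N Hr. destruct (Hp1 r N Hr) as [j [Hj [_ H]]]. eauto. }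
  destruct (cluster d Hm Hc (fun _ _ => True) (fun _ _ _ _ H => H)
     (fun r N _ => ex_intro _ N (conj (le_n N) I)) (fun j => zpow f g (Z.of_nat j) x))
     as [p2 Hp2].
  destruct (cluster d Hm Hc (fun r j => d (zpow f g (Z.of_nat j) x) p2 < r))
     with (b := fun j => zpow f g (Z.of_nat j) y) as [q2 Hq2].
  { intros r r' j Hr H. lra. }
  { intros r N Hr. destruct (Hp2 r N Hr) as [j [Hj [_ H]]]. eauto. }
  simpl in Hq1, Hq2.
  assert (Hpq1 : d p1 q1 <= del).
  { apply le_epsilon. intros r Hr. destruct (Hq1 (r/2) 0%nat ltac:(lra)) as [j [_ [H1 H2]]].
    pose proof (HG (- Z.of_nat j)%Z) as G1.
    pose proof (m_tri d Hm p1 (zpow f g (- Z.of_nat j) x) q1) as G2.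
    pose proof (m_tri d Hm (zpow f g (- Z.of_nat j) x) (zpow f g (- Z.of_nat j) y) q1) as G3.
    rewrite (m_sym d Hm p1 (zpow f g (- Z.of_nat j) x)) in G2. lra. }
  assert (Hpq2 : d q2 p2 <= del).
  { apply le_epsilon. intros r Hr. destruct (Hq2 (r/2) 0%nat ltac:(lra)) as [j [_ [H1 H2]]].
    pose proof (HG (Z.of_nat j)%Z) as G1.
    pose proof (m_tri d Hm q2 (zpow f g (Z.of_nat j) y) p2) as G2.
    pose proof (m_tri d Hm (zpow f g (Z.of_nat j) y) (zpow f g (Z.of_nat j) x) p2) as G3.
    rewrite (m_sym d Hm q2 (zpow f g (Z.of_nat j) y)) in G2.
    rewrite (m_sym d Hm (zpow f g (Z.of_nat j) y) (zpow f g (Z.of_nat j) x)) in G3. lra. }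
  assert (Key : forall eta, 0 < eta -> eta <= e1 -> d y x <= eta).
  { intros eta Heta Heta1.
    destruct (HL eta Heta) as [deta [Hdeta HLeta]].
    set (s := Rmin (deta/2) e1).
    assert (Hs : 0 < s) by (apply Rmin_pos; lra).
    assert (Hs1 : s <= deta/2) by apply Rmin_l.
    assert (Hs2 : s <= e1) by apply Rmin_r.
    destruct (bridge d f g Hm Hfg e1 d1 ltac:(lra) HL1 p1 q1 s ltac:(lra) Hs)
      as [w1 [K1 [HK1 [B1a [B1b [B1c B1d]]]]]].
    destruct (bridge d f g Hm Hfg e1 d1 ltac:(lra) HL1 q2 p2 s ltac:(lra) Hs)
      as [w2 [K2 [HK2 [B2a [B2b [B2c B2d]]]]]].
    destruct (zpow_cont d f g Hfc Hgc K1 p1 s Hs) as [ra [Hra Hca]].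
    destruct (zpow_cont d f g Hfc Hgc K1 q1 s Hs) as [rb [Hrb Hcb]].
    destruct (zpow_cont d f g Hfc Hgc K2 q2 s Hs) as [rc [Hrc Hcc]].
    destruct (zpow_cont d f g Hfc Hgc K2 p2 s Hs) as [re [Hre Hce]].
    destruct (Hq1 (Rmin ra rb) K1 (Rmin_pos _ _ Hra Hrb)) as [Q [HQ [HQ1 HQ2]]].
    destruct (Hq2 (Rmin rc re) (S K2) (Rmin_pos _ _ Hrc Hre)) as [P [HP [HP1 HP2]]].
    set (T1 := (- Z.of_nat Q)%Z) in *.
    set (T2 := Z.of_nat P) in *.
    set (k1 := Z.of_nat K1) in *.
    set (k2 := Z.of_nat K2) in *.
    assert (C1 : forall k, (Z.abs (k - T1) <= k1)%Z ->
       d (zpow f g (k - T1) p1) (zpow f g k x) < s).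
    { intros k Hk. rewrite (zpow_shift f g Hfg Hgf k T1 x). apply Hca; auto.
      rewrite m_sym; auto. eapply Rlt_le_trans; [exact HQ1| apply Rmin_l]. }
    assert (C2 : forall k, (Z.abs (k - T1) <= k1)%Z ->
       d (zpow f g (k - T1) q1) (zpow f g k y) < s).
    { intros k Hk. rewrite (zpow_shift f g Hfg Hgf k T1 y). apply Hcb; auto.
      rewrite m_sym; auto. eapply Rlt_le_trans; [exact HQ2| apply Rmin_r]. }
    assert (C3 : forall k, (Z.abs (k - T2) <= k2)%Z ->
       d (zpow f g (k - T2) q2) (zpow f g k y) < s).
    { intros k Hk. rewrite (zpow_shift f g Hfg Hgf k T2 y). apply Hcc; auto.
      rewrite m_sym; auto. eapply Rlt_le_trans; [exact HP2| apply Rmin_l]. }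
    assert (C4 : forall k, (Z.abs (k - T2) <= k2)%Z ->
       d (zpow f g (k - T2) p2) (zpow f g k x) < s).
    { intros k Hk. rewrite (zpow_shift f g Hfg Hgf k T2 x). apply Hce; auto.
      rewrite m_sym; auto. eapply Rlt_le_trans; [exact HP1| apply Rmin_r]. }
    assert (Hord : (1 <= k1 /\ 1 <= k2 /\ T1 + k1 <= 0 /\ 1 <= T2 - k2)%Z)
      by (unfold k1, k2, T1, T2; lia).
    set (Xo := fun k => zpow f g k x).
    set (Yo := fun k => zpow f g k y).
    set (W1 := fun k => zpow f g (k - T1) w1).
    set (W2 := fun k => zpow f g (k - T2) w2).
    set (xi := cat Xo (cat W1 (cat Yo (cat W2 Xo (T2 + k2)) (T2 - k2)) (T1 + k1)) (T1 - k1)).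
    assert (Horb : forall (u : X) T k, f (zpow f g (k - T) u) = zpow f g (k + 1 - T) u).
    { intros u T k. replace (k + 1 - T)%Z with ((k - T) + 1)%Z by lia.
      rewrite zpow_succ; auto. }
    assert (Horb0 : forall (u : X) k, f (zpow f g k u) = zpow f g (k + 1) u).
    { intros u k. rewrite zpow_succ; auto. }
    assert (Hd0 : 0 <= deta) by lra.
    assert (HPO : PO d f xi deta).
    { unfold xi. apply PO_cat; auto.
      - intros k; apply Horb0.
      - apply PO_cat; auto.
        + intros k; apply Horb.
        + apply PO_cat; auto.
          * intros k; apply Horb0.
          * apply PO_cat; auto.
            -- intros k; apply Horb.
            -- apply PO_orbit; auto. intros k; apply Horb0.
            --
               unfold W2, Xo. replace (T2 + k2 - T2)%Z with k2 by lia.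
               pose proof (C4 (T2 + k2)%Z ltac:(lia)).
               replace (T2 + k2 - T2)%Z with k2 in H by lia.
               pose proof (m_tri d Hm (zpow f g k2 w2) (zpow f g k2 p2) (zpow f g (T2 + k2) x)).
               lra.
          *
            unfold cat. rewrite (proj2 (Z.ltb_lt _ _)) by lia. unfold Yo, W2.
            replace (T2 - k2 - T2)%Z with (- k2)%Z by lia.
            pose proof (C3 (T2 - k2)%Z ltac:(lia)) as G1.
            replace (T2 - k2 - T2)%Z with (- k2)%Z in G1 by lia.
            pose proof (m_tri d Hm (zpow f g (T2 - k2) y) (zpow f g (- k2) q2) (zpow f g (- k2) w2)) as G2.
            rewrite (m_sym d Hm (zpow f g (T2 - k2) y) (zpow f g (- k2) q2)) in G2.
            rewrite (m_sym d Hm (zpow f g (- k2) q2) (zpow f g (- k2) w2)) in G2. lra.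
        +
          unfold cat. rewrite (proj2 (Z.ltb_lt _ _)) by lia. unfold Yo, W1.
          replace (T1 + k1 - T1)%Z with k1 by lia.
          pose proof (C2 (T1 + k1)%Z ltac:(lia)).
          replace (T1 + k1 - T1)%Z with k1 in H by lia.
          pose proof (m_tri d Hm (zpow f g k1 w1) (zpow f g k1 q1) (zpow f g (T1 + k1) y)).
          lra.
      -
        unfold cat. rewrite (proj2 (Z.ltb_lt _ _)) by lia. unfold Xo, W1.
        replace (T1 - k1 - T1)%Z with (- k1)%Z by lia.
        pose proof (C1 (T1 - k1)%Z ltac:(lia)) as G1.
        replace (T1 - k1 - T1)%Z with (- k1)%Z in G1 by lia.
        pose proof (m_tri d Hm (zpow f g (T1 - k1) x) (zpow f g (- k1) p1) (zpow f g (- k1) w1)) as G2.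
        rewrite (m_sym d Hm (zpow f g (T1 - k1) x) (zpow f g (- k1) p1)) in G2.
        rewrite (m_sym d Hm (zpow f g (- k1) p1) (zpow f g (- k1) w1)) in G2. lra. }
    assert (PW1 : forall k, (Z.abs (k - T1) <= k1)%Z -> d (W1 k) (zpow f g k x) <= e1 + s + del).
    { intros k Hk. unfold W1. destruct (Z_lt_le_dec (k - T1) 0) as [l|l].
      + pose proof (B1a (k - T1)%Z l) as G1. pose proof (C1 k Hk) as G2.
        pose proof (m_tri d Hm (zpow f g (k - T1) w1) (zpow f g (k - T1) p1) (zpow f g k x)) as G3.
        lra.
      + pose proof (B1b (k - T1)%Z l) as G1. pose proof (C2 k Hk) as G2. pose proof (HG k) as G0.
        pose proof (m_tri d Hm (zpow f g (k - T1) w1) (zpow f g (k - T1) q1) (zpow f g k y)) as G3.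
        pose proof (m_tri d Hm (zpow f g (k - T1) w1) (zpow f g k y) (zpow f g k x)) as G4.
        rewrite (m_sym d Hm (zpow f g k y) (zpow f g k x)) in G4. lra. }
    assert (PW2 : forall k, (Z.abs (k - T2) <= k2)%Z -> d (W2 k) (zpow f g k x) <= e1 + s + del).
    { intros k Hk. unfold W2. destruct (Z_lt_le_dec (k - T2) 0) as [l|l].
      + pose proof (B2a (k - T2)%Z l) as G1. pose proof (C3 k Hk) as G2. pose proof (HG k) as G0.
        pose proof (m_tri d Hm (zpow f g (k - T2) w2) (zpow f g (k - T2) q2) (zpow f g k y)) as G3.
        pose proof (m_tri d Hm (zpow f g (k - T2) w2) (zpow f g k y) (zpow f g k x)) as G4.
        rewrite (m_sym d Hm (zpow f g k y) (zpow f g k x)) in G4. lra.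
      + pose proof (B2b (k - T2)%Z l) as G1. pose proof (C4 k Hk) as G2.
        pose proof (m_tri d Hm (zpow f g (k - T2) w2) (zpow f g (k - T2) p2) (zpow f g k x)) as G3.
        lra. }
    assert (PY : forall k, d (Yo k) (zpow f g k x) <= e1 + s + del).
    { intros k. unfold Yo. rewrite m_sym; auto. pose proof (HG k). lra. }
    assert (PX : forall k, d (Xo k) (zpow f g k x) <= e1 + s + del).
    { intros k. unfold Xo. rewrite m_refl; auto. lra. }
    assert (Htube : forall k, d (xi k) (zpow f g k x) <= e1 + s + del).
    { intros k. unfold xi, cat. ltbs;
      first [ (exfalso; lia) | apply PX | apply PY | (apply PW1; lia) | (apply PW2; lia) ]. }
    assert (Hends : exists N : nat, forall k, (Z.of_nat N <= Z.abs k)%Z -> xi k = zpow f g k x).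
    { exists (Z.to_nat (Z.abs (T1 - k1)) + Z.to_nat (Z.abs (T2 + k2)) + 1)%nat.
      intros k Hk. unfold xi, cat. ltbs; try reflexivity; lia. }
    pose proof (loop d f g Hm eps x Hx eta deta HLeta xi (e1 + s + del) HPO
                  ltac:(unfold e1 in *; lra) Htube Hends 0%Z) as H0.
    unfold xi, cat in H0. revert H0. ltbs; try lia. unfold Yo. simpl. auto. }
  apply (m_eq d Hm). apply Rle_antisym; [|apply m_nonneg; auto].
  destruct (Rle_lt_dec (d y x) 0) as [H|H]; [exact H|].
  exfalso. pose proof (Key (Rmin (d y x / 2) e1) (Rmin_pos (d y x / 2) e1 ltac:(lra) He1) (Rmin_r _ _)).
  pose proof (Rmin_l (d y x / 2) e1). lra.
Qed.
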